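(* Let $Z$ be a Hausdorff, completely regular, non-discrete topological space. Then there exists a Hausdorff scattered space $X$, which is neither locally compact nor zero-dimensional, such that $\mathrm{Homeo}(Z)$ is isomorphic as an abstract group to the quotient $\mathrm{Homeo}(X)/\mathrm{Fix}(X^{(1)})$. Moreover, if $Z$ is the topological realization of a graph $\mathcal{G}$ without vertices of degree $2$, then the composition of the quotient map $\mathrm{Homeo}(X)\to\mathrm{Homeo}(X)/\mathrm{Fix}(X^{(1)})$, this isomorphism, and the map $\mathrm{Homeo}(Z)\to\mathrm{Aut}(\mathcal{G})$ given by restricting a homeomorphism to its action on the vertices, is a continuous surjection $\mathrm{Homeo}(X)\to\mathrm{Aut}(\mathcal{G})$.
   Context: A space is scattered if every nonempty subset has a point isolated in that subset. $X^{(1)}$ denotes the derived set of $X$ (its set of non-isolated points) and $\mathrm{Fix}(X^{(1)})$ the subgroup of homeomorphisms of $X$ fixing $X^{(1)}$ pointwise. For scattered $X$, $\mathrm{Homeo}(X)$ carries the topology of pointwise convergence on $X$. Completely regular: points can be separated from closed sets by continuous real-valued functions. Locally compact means Hausdorff with every point having a quasi-compact neighbourhood; zero-dimensional means having a basis of clopen sets. A graph is a simple non-oriented graph $(V,E)$ with $E$ nonempty; its topological realization is obtained by identifying each edge with $[0,1]$ and gluing endpoints along the vertices. Homeomorphisms of the realization preserve the vertices of degree $\neq 2$, hence when there are no vertices of degree 2 restriction to vertices gives a map $\mathrm{Homeo}(Z)\to\mathrm{Aut}(\mathcal{G})$; $\mathrm{Aut}(\mathcal{G})\le\mathrm{Sym}(V)$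 carries the topology of pointwise convergence on the discrete set $V$. *)

(* Defs.v *)
From HB Require Import structures.
From mathcomp Require Import all_boot all_order all_algebra.
From mathcomp Require Import all_classical all_reals all_analysis.
From mathcomp Require Import Rstruct Rstruct_topology.
Set Implicit Arguments. Unset Strict Implicit. Unset Printing Implicit Defensive.
Import Order.TTheory GRing.Theory Num.Theory.
Local Open Scope classical_set_scope.

Definition completely_regular (T : topologicalType) : Prop :=
  forall (a : T) (B : set T), closed B -> ~ B a ->
    exists f : T -> Rdefinitions.R, continuous f /\ f a = 0%R /\
      (forall b, B b -> f b = 1%R).

Definition isolated_pt (T : topologicalType) (x : T) : Prop := open [set x].

Definition derived_set (T : topologicalType) : set T :=
  [set x | ~ isolated_pt x].

Definition discrete_sp (T : topologicalType) : Prop := forall x : T, isolated_pt x.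

Definition scattered (T : topologicalType) : Prop :=
  forall A : set T, A !=set0 ->
    exists x, A x /\ exists U : set T, open U /\ U `&` A = [set x].

Definition locally_compact_sp (T : topologicalType) : Prop :=
  hausdorff_space T /\ forall x : T, exists K : set T, compact K /\ nbhs x K.

Definition zero_dim (T : topologicalType) : Prop :=
  forall (x : T) (U : set T), nbhs x U ->
    exists V : set T, open V /\ closed V /\ V x /\ V `<=` U.

Definition homeo (T : topologicalType) (f : T -> T) : Prop :=
  exists g : T -> T, cancel f g /\ cancel g f /\ continuous f /\ continuous g.

Definition fixes_derived (T : topologicalType) (f : T -> T) : Prop :=
  forall x : T, @derived_set T x -> f x = x.

(** [Phi] is a group homomorphism from Homeo(X) onto Homeo(Z) whose kernel is
    exactly Fix(X^(1)); i.e. it induces an isomorphism of abstract groups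
    Homeo(X)/Fix(X^(1)) ~= Homeo(Z), and Phi is the composite
    Homeo(X) -> Homeo(X)/Fix(X^(1)) -> Homeo(Z). *)
Definition quotient_iso_map (X Z : topologicalType) (Phi : (X -> X) -> (Z -> Z)) : Prop :=
  (forall h, homeo h -> homeo (Phi h)) /\
  (forall h k, homeo h -> homeo k -> Phi (h \o k) = Phi h \o Phi k) /\
  (forall g, homeo g -> exists h, homeo h /\ Phi h = g) /\
  (forall h, homeo h -> (Phi h = id <-> fixes_derived h)).

Definition simple_graph (V : Type) (adj : V -> V -> Prop) : Prop :=
  (forall x y, adj x y -> adj y x) /\ (forall x, ~ adj x x) /\
  (exists x y, adj x y).

Definition degree_two (V : Type) (adj : V -> V -> Prop) (x : V) : Prop :=
  exists y1 y2, y1 <> y2 /\ forall y, adj x y <-> (y = y1 \/ y = y2).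

Definition unit_int : set Rdefinitions.R := `[0%R, 1%R].
Definition open_unit_int : set Rdefinitions.R := `]0%R, 1%R[.

(** Z is (homeomorphic to) the topological realization of the graph (V, adj):
    [vtx v] is the point of vertex v and [edge x y : [0,1] -> Z] parametrizes
    the edge {x,y} from x to y; Z is the quotient of V + (E x [0,1]) gluing
    endpoints to vertices, with the quotient (weak) topology. *)
Definition realization (V : Type) (adj : V -> V -> Prop) (Z : topologicalType)
    (vtx : V -> Z) (edge : V -> V -> Rdefinitions.R -> Z) : Prop :=
  simple_graph adj /\
  injective vtx /\
  (forall x y, adj x y -> edge x y 0%R = vtx x /\ edge x y 1%R = vtx y) /\
  (forall x y t, adj x y -> unit_int t -> edge y x (1 - t)%R = edge x y t) /\
  (forall x y t v, adj x y -> open_unit_int t -> edge x y t <> vtx v) /\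
  (forall x y t x' y' t', adj x y -> adj x' y' -> open_unit_int t ->
     open_unit_int t' -> edge x y t = edge x' y' t' ->
     (x = x' /\ y = y' /\ t = t') \/ (x = y' /\ y = x' /\ t = (1 - t')%R)) /\
  (forall z : Z, (exists v, z = vtx v) \/
     (exists x y t, adj x y /\ open_unit_int t /\ z = edge x y t)) /\
  (forall A : set Z, open A <->
     forall x y, adj x y -> exists O : set Rdefinitions.R, open O /\
       (edge x y @^-1` A) `&` unit_int = O `&` unit_int).

Definition graph_aut (V : Type) (adj : V -> V -> Prop) (a : V -> V) : Prop :=
  bijective a /\ forall x y, adj x y <-> adj (a x) (a y).

(** Continuity of F : Homeo(X) -> Aut(G), where Homeo(X) carries the topology
    of pointwise convergence on X and Aut(G) that of pointwise convergence on
    the discrete set V (basic neighbourhoods written out). *)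
Definition ptws_continuous (X : topologicalType) (V : Type)
    (F : (X -> X) -> (V -> V)) : Prop :=
  forall h, homeo h -> forall Fv : seq V,
    exists (S : seq X) (U : X -> set X),
      (forall x, List.In x S -> open (U x) /\ U x (h x)) /\
      (forall g, homeo g -> (forall x, List.In x S -> U x (g x)) ->
         forall v, List.In v Fv -> F g v = F h v).

(* Main.v *)
Require Import Defs.
From HB Require Import structures.
From mathcomp Require Import all_boot all_order all_algebra.
From mathcomp Require Import all_classical all_reals all_analysis.
From mathcomp Require Import Rstruct Rstruct_topology.
From mathcomp Require Import lra ring.
Set Implicit Arguments. Unset Strict Implicit. Unset Printing Implicit Defensive.
Import Order.TTheory GRing.Theory Num.Theory.
Local Open Scope classical_set_scope.


Definition Xc (Z : topologicalType) := (Z + Z * nat)%type.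
HB.instance Definition _ (Z : topologicalType) := Choice.copy (Xc Z) (Z + Z * nat)%type.

Definition opX (Z : topologicalType) (A : set (Xc Z)) :=
  forall z, A (inl z) -> exists (U : set Z) (n : nat), open U /\ U z /\
     forall u m, U u -> (n <= m)%N -> A (inr (u, m)).

Lemma opXT (Z : topologicalType) : opX (@setT (Xc Z)).
Proof. by move=> z _; exists setT, 0%N; split; [exact: openT|]. Qed.

Lemma opXI (Z : topologicalType) : setI_closed (@opX Z).
Proof.
move=> A B oA oB z [/oA [U [n [Uo [Uz HU]]]] /oB [U' [n' [U'o [U'z HU']]]]].
exists (U `&` U'), (maxn n n'); split; first exact: openI.
split=> // u m [Uu U'u] le; split.
  by apply: HU => //; apply: leq_trans le; exact: leq_maxl.
by apply: HU' => //; apply: leq_trans le; exact: leq_maxr.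
Qed.

Lemma opX_bigU (Z : topologicalType) (I : Type) (f : I -> set (Xc Z)) :
  (forall i, opX (f i)) -> opX (\bigcup_i f i).
Proof.
move=> Hf z [i _ /Hf [U [n [Uo [Uz HU]]]]]; exists U, n; split=> //; split=> //.
by move=> u m Uu le; exists i => //; apply: HU.
Qed.

HB.instance Definition _ (Z : topologicalType) :=
  isOpenTopological.Build (Xc Z) (@opXT Z) (@opXI Z) (@opX_bigU Z).

Lemma openXE (Z : topologicalType) (A : set (Xc Z)) : open A = opX A.
Proof. by []. Qed.


Lemma inl_not_open (Z : topologicalType) (z : Z) : ~ open [set (inl z : Xc Z)].
Proof.
rewrite openXE => /(_ z erefl) [U [n [_ [Uz HU]]]].
by have := HU z n Uz (leqnn n).
Qed.

Lemma inr_open (Z : topologicalType) p : open [set (inr p : Xc Z)].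
Proof. by rewrite openXE. Qed.

Lemma derivedX (Z : topologicalType) (x : Xc Z) :
  derived_set x <-> exists z, x = inl z.
Proof.
split.
  case: x => [z|p] H; first by exists z.
  by exfalso; apply: H; exact: inr_open.
by move=> [z ->]; exact: inl_not_open.
Qed.

Lemma homeo_inj (T : topologicalType) (f : T -> T) : homeo f -> injective f.
Proof. by move=> [g [fg _]]; exact: can_inj fg. Qed.

Lemma homeo_inl (Z : topologicalType) (h : Xc Z -> Xc Z) z :
  homeo h -> exists z', h (inl z) = inl z'.
Proof.
move=> hh; case E: (h (inl z)) => [z'|p]; first by exists z'.
exfalso; apply: (@inl_not_open Z z).
have -> : [set (inl z : Xc Z)] = h @^-1` [set inr p].
  apply/seteqP; split => x /=; first by move=> ->.
  by move=> Ex; apply: (homeo_inj hh); rewrite Ex E.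
have [g [_ [_ [hc _]]]] := hh.
by move/continuousP: hc; apply; exact: inr_open.
Qed.

Definition PhiX (Z : topologicalType) (h : Xc Z -> Xc Z) (z : Z) : Z :=
  match h (inl z) with inl z' => z' | inr _ => z end.

Lemma PhiXE (Z : topologicalType) (h : Xc Z -> Xc Z) z :
  homeo h -> h (inl z) = inl (PhiX h z).
Proof.
move=> hh; have [z' E] := homeo_inl z hh.
by rewrite /PhiX E.
Qed.

Definition liftS (Z : topologicalType) (S : set Z) : set (Xc Z) :=
  fun p => match p with inl z => S z | inr (u, _) => S u end.

Lemma liftS_open (Z : topologicalType) (S : set Z) : open S -> open (liftS S).
Proof. by move=> oS; rewrite openXE => z Sz; exists S, 0%N. Qed.

Lemma hausdorffX (Z : topologicalType) : hausdorff_space Z -> hausdorff_space (Xc Z).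
Proof.
rewrite !open_hausdorff => hZ x y xy.
case: x y xy => [a|[a i]] [b|[b j]] xy.
- have ab : a != b by apply: contraNN xy => /eqP ->.
  have [[A B] [/= aA bB] [oA oB /eqP AB]] := hZ a b ab.
  exists (liftS A, liftS B); first by split; apply/mem_set; [move/set_mem: aA|move/set_mem: bB].
  split; [exact: liftS_open|exact: liftS_open|].
  apply/eqP; apply/seteqP; split => // -[z|[z k]] [/= Az Bz];
    by have : (A `&` B) z by [split]; rewrite AB.
- exists ([set q | q <> inr (b, j)], [set inr (b, j)]); first by split; rewrite inE.
  split; [|exact: inr_open|].
    rewrite openXE => z _; exists setT, j.+1; split; first exact: openT.
    by split => // u m _ le [_ E]; rewrite E ltnn in le.
  by apply/eqP; apply/seteqP; split => // q [/= q1 q2].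
- exists ([set inr (a, i)], [set q | q <> inr (a, i)]); first by split; rewrite inE.
  split; [exact: inr_open| |].
    rewrite openXE => z _; exists setT, i.+1; split; first exact: openT.
    by split => // u m _ le [_ E]; rewrite E ltnn in le.
  by apply/eqP; apply/seteqP; split => // q [/= q1 q2].
- exists ([set inr (a, i)], [set inr (b, j)]); first by split; rewrite inE.
  split; [exact: inr_open|exact: inr_open|].
  apply/eqP; apply/seteqP; split => // q [/= -> E].
  by move: xy; rewrite E eqxx.
Qed.

Lemma scatteredX (Z : topologicalType) : scattered (Xc Z).
Proof.
move=> A [x0 Ax0].
have [[p Ap]|nr] := pselect (exists p, A (inr p)).
  exists (inr p); split => //; exists [set inr p]; split; first exact: inr_open.
  by apply/seteqP; split => [q [->]//|q ->].
case: x0 Ax0 => [z|p] Ax0; last by exfalso; apply: nr; exists p.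
exists (inl z); split => //.
exists [set q | q = inl z \/ exists p, q = inr p]; split.
  by rewrite openXE => z' _; exists setT, 0%N; split; [exact: openT|split=> // u m; right; exists (u, m)].
apply/seteqP; split => [q [[->//|[p Ep]] Aq]|q ->]; last by split => //; left.
by exfalso; apply: nr; exists p; rewrite -Ep.
Qed.

Lemma nonisol (Z : topologicalType) (z : Z) : ~ open [set z] ->
  forall U, open U -> U z -> exists u, U u /\ u <> z.
Proof.
move=> nz U oU Uz; apply: contra_notP nz => H.
have -> : [set z] = U; last by [].
apply/seteqP; split => [u ->//|u Uu]; apply: contra_notP H => uz.
by exists u.
Qed.

Lemma not_zero_dimX (Z : topologicalType) : ~ discrete_sp Z -> ~ zero_dim (Xc Z).
Proof.
move=> /existsNP [z nz] zd.
have [|V [oV [cV [Vz VU]]]] := zd (inl z) [set q | q = inl z \/ exists p, q = inr p].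
  rewrite nbhsE; exists [set q | q = inl z \/ exists p, q = inr p] => //; split; last by left.
  by rewrite openXE => z' _; exists setT, 0%N; split; [exact: openT|split=> // u m; right; exists (u, m)].
move: oV; rewrite openXE => /(_ z Vz) [U [n [oU [Uz HU]]]].
have [w [Uw wz]] := nonisol nz oU Uz.
have : closure V (inl w).
  move=> B; rewrite nbhsE => -[B' [oB' B'w] B'B].
  move: oB'; rewrite openXE => /(_ w B'w) [U1 [m [_ [U1w HU1]]]].
  exists (inr (w, maxn n m)); split.
    by apply: HU => //; exact: leq_maxl.
  by apply: B'B; apply: HU1 => //; exact: leq_maxr.
by move/cV/VU => -[[/wz]|[p]].
Qed.

Lemma not_lcX (Z : topologicalType) : hausdorff_space Z -> ~ discrete_sp Z ->
  ~ locally_compact_sp (Xc Z).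
Proof.
move=> hZ /existsNP [z nz] [_ /(_ (inl z)) [K [cK]]].
rewrite nbhsE => -[B [oB Bz] BK].
move: oB; rewrite openXE => /(_ z Bz) [U [n [oU [Uz HU]]]].
pose F := fun S : set (Xc Z) => exists U', open U' /\ U' z /\
   forall u, U' u -> u <> z -> S (inr (u, n)).
have FF : Filter F.
  split.
  - by exists setT; split; [exact: openT|].
  - move=> S1 S2 [U1 [op1 [z1 H1]]] [U2 [op2 [z2 H2]]].
    exists (U1 `&` U2); split; first exact: openI.
    by split => // u [u1 u2] uz; split; [apply: H1|apply: H2].
  - move=> S1 S2 S12 [U1 [op1 [z1 H1]]]; exists U1; split => //; split => //.
    by move=> u u1 uz; apply: S12; apply: H1.
have PF : ProperFilter F.
  apply: Build_ProperFilter_ex => // S [U1 [op1 [z1 H1]]].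
  have [u [u1 uz]] := nonisol nz op1 z1.
  by exists (inr (u, n)); apply: H1.
have FK : F K.
  exists U; split => //; split => // u Uu _; apply: BK; exact: HU.
have [x [_ clx]] := cK F PF FK.
pose A := [set q : Xc Z | exists u, u <> z /\ q = inr (u, n)].
have FA : F A by exists setT; split; [exact: openT|split=> // u _ uz; exists u].
case: x clx => [w|[w k]] clx.
- have NB : nbhs (inl w : Xc Z) [set q | q = inl w \/ exists u m, (n < m)%N /\ q = inr (u, m)].
    rewrite nbhsE; eexists; last exact: subset_refl.
    split; last by left.
    rewrite openXE => z' _; exists setT, n.+1; split; first exact: openT.
    by split => // u m _ le; right; exists u, m.
  have [q [[u [_ ->]] [//|[u' [m [lt [_ E]]]]]]] := clx A _ FA NB.
  by rewrite E ltnn in lt.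
- have wz_or : w = z \/ w <> z by exact: (Classical_Prop.classic (w = z)).
  have NB : nbhs (inr (w, k) : Xc Z) [set inr (w, k)].
    by rewrite nbhsE; exists [set inr (w, k)] => //; split => //; exact: inr_open.
  case: wz_or => [wz|wz].
  + have [q [[u [uz ->]] [E _]]] := clx A _ FA NB.
    by apply: uz; rewrite E wz.
  + have zw : z != w by apply/eqP => E; apply: wz; rewrite E.
    move: hZ; rewrite open_hausdorff => /(_ z w zw) [[A1 B1] [/= zA wB] [oA _ /eqP AB]].
    have FA1 : F [set q | exists u, A1 u /\ u <> z /\ q = inr (u, n)].
      exists A1; split => //; split; first by rewrite inE in zA.
      by move=> u Au uz; exists u.
    have [q [[u [Au [uz ->]]] [E _]]] := clx _ _ FA1 NB.
    case: E => uw; have : (A1 `&` B1) w by split; [rewrite -uw|move/set_mem: wB].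
    by rewrite AB.
Qed.


Lemma homeo_inv (T : topologicalType) (f : T -> T) : homeo f ->
  exists g, homeo g /\ cancel f g /\ cancel g f.
Proof.
move=> [g [fg [gf [cf cg]]]]; exists g; split => //.
by exists f.
Qed.

Lemma PhiX_comp (Z : topologicalType) (h k : Xc Z -> Xc Z) :
  homeo h -> homeo k -> PhiX (h \o k) = PhiX h \o PhiX k.
Proof.
move=> hh hk; apply: funext => z.
by rewrite /PhiX /= (PhiXE z hk) (PhiXE _ hh).
Qed.

Lemma PhiX_id (Z : topologicalType) : PhiX (@id (Xc Z)) = id.
Proof. by apply: funext. Qed.

Lemma open_ltf (Z : topologicalType) (f : Z -> Rdefinitions.R) (c : Rdefinitions.R) :
  continuous f -> open [set v | (f v < c)%R].
Proof. by move/continuousP => fc; apply: (fc [set x | (x < c)%R]); exact: open_lt. Qed.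

Lemma open_gtf (Z : topologicalType) (f : Z -> Rdefinitions.R) (c : Rdefinitions.R) :
  continuous f -> open [set v | (c < f v)%R].
Proof. by move/continuousP => fc; apply: (fc [set x | (c < x)%R]); exact: open_gt. Qed.

Lemma openB_aux (Z : topologicalType) (f : Z -> Rdefinitions.R) (w : Z) (P : Rdefinitions.R -> Prop) :
  open [set v | P (f v)] -> P (f w) ->
  open [set q : Xc Z | q = inl w \/ exists v j, P (f v) /\ q = inr (v, j)].
Proof.
move=> oP Pw; rewrite openXE => z' [[->]|[v [j [_ //]]]].
exists [set v | P (f v)], 0%N; split => //; split => // u m Pu _.
by right; exists u, m.
Qed.

Lemma PhiX_cont (Z : topologicalType) (h : Xc Z -> Xc Z) :
  completely_regular Z -> homeo h -> continuous (PhiX h).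
Proof.
move=> cr hh; have hc : continuous h by case: hh => g [_ [_ []]].
apply/continuousP => W oW; rewrite openE => z Wz.
set w := PhiX h z.
have [f [fc [fw f1]]] := cr w (~` W) (open_closedC oW) (fun H => H Wz).
pose B := [set q : Xc Z | q = inl w \/ exists v j, (f v < 2^-1)%R /\ q = inr (v, j)].
have oB : open B.
  apply: (@openB_aux Z f w (fun x => x < 2^-1)%R); first exact: open_ltf.
  by rewrite fw invr_gt0.
have := (continuousP _).1 hc B oB; rewrite openXE => /(_ z).
case; first by left; rewrite (PhiXE z hh).
move=> U [n [oU [Uz HU]]].
rewrite /interior nbhsE; exists U; first by split.
move=> u Uu /=; have [//|Wu] := pselect (W (PhiX h u)); exfalso.
set w2 := PhiX h u.
have f2 : f w2 = 1%R by apply: f1.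
pose C := [set q : Xc Z | q = inl w2 \/ exists v j, (2^-1 < f v)%R /\ q = inr (v, j)].
have oC : open C.
  apply: (@openB_aux Z f w2 (fun x => 2^-1 < x)%R); first exact: open_gtf.
  by rewrite f2 invf_lt1 // ltr1n.
have := (continuousP _).1 hc C oC; rewrite openXE => /(_ u).
case; first by left; rewrite (PhiXE u hh).
move=> U2 [m [oU2 [U2u HU2]]].
have HB := HU u (maxn n m) Uu (leq_maxl _ _).
have HC := HU2 u (maxn n m) U2u (leq_maxr _ _).
case: HB => [E|[v [j [fv E]]]].
  by move: E; rewrite -(PhiXE z hh) => /(homeo_inj hh).
case: HC => [E2|[v' [j' [fv' E2]]]].
  by move: E2; rewrite -(PhiXE u hh) => /(homeo_inj hh).
move: E2; rewrite E => -[ev _]; rewrite ev in fv.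
by move: (lt_trans fv fv'); rewrite ltxx.
Qed.

Lemma homeo_PhiX (Z : topologicalType) (h : Xc Z -> Xc Z) :
  completely_regular Z -> homeo h -> homeo (PhiX h).
Proof.
move=> cr hh; have [g [hg [hgc ghc]]] := homeo_inv hh.
exists (PhiX g); split; [|split; [|split]].
- move=> z; have E : (inl (PhiX g (PhiX h z)) : Xc Z) = inl z.
    by rewrite -(PhiXE _ hg) -(PhiXE _ hh) hgc.
  by case: E.
- move=> z; have E : (inl (PhiX h (PhiX g z)) : Xc Z) = inl z.
    by rewrite -(PhiXE _ hh) -(PhiXE _ hg) ghc.
  by case: E.
- exact: PhiX_cont.
- exact: PhiX_cont.
Qed.

Definition liftH (Z : topologicalType) (g : Z -> Z) (p : Xc Z) : Xc Z :=
  match p with inl z => inl (g z) | inr (u, m) => inr (g u, m) end.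

Lemma liftH_cont (Z : topologicalType) (g : Z -> Z) : continuous g -> continuous (liftH g).
Proof.
move=> gc; apply/continuousP => A; rewrite !openXE => oA z /= Agz.
have [U [n [oU [Ugz HU]]]] := oA _ Agz.
exists (g @^-1` U), n; split; first by move/continuousP: gc; apply.
by split => // u m Uu le; apply: HU.
Qed.

Lemma liftH_homeo (Z : topologicalType) (g : Z -> Z) : homeo g -> homeo (liftH g).
Proof.
move=> [g' [gg' [g'g [gc g'c]]]]; exists (liftH g'); split; [|split; [|split]].
- by case => [z|[u m]] /=; rewrite gg'.
- by case => [z|[u m]] /=; rewrite g'g.
- exact: liftH_cont.
- exact: liftH_cont.
Qed.

Lemma PhiX_liftH (Z : topologicalType) (g : Z -> Z) : PhiX (liftH g) = g.
Proof. by apply: funext. Qed.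

Lemma quotient_isoX (Z : topologicalType) : completely_regular Z ->
  quotient_iso_map (@PhiX Z).
Proof.
move=> cr; split; [|split; [|split]].
- by move=> h; exact: homeo_PhiX.
- by move=> h k hh hk; exact: PhiX_comp.
- by move=> g hg; exists (liftH g); split; [exact: liftH_homeo|exact: PhiX_liftH].
- move=> h hh; split.
  + move=> E x /derivedX [z ->]; by rewrite (PhiXE z hh) E.
  + move=> fx; apply: funext => z /=.
    have := fx (inl z) ((derivedX _).2 (ex_intro _ z erefl)).
    by rewrite (PhiXE z hh) => -[].
Qed.

Local Open Scope ring_scope.



Notation R := Rdefinitions.R.

Lemma uiE (t : R) : unit_int t <-> 0 <= t <= 1.
Proof. by rewrite /unit_int /= in_itv /=. Qed.

Lemma ouiE (t : R) : open_unit_int t <-> 0 < t < 1.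
Proof. by rewrite /open_unit_int /= in_itv /=. Qed.

Lemma nearR (t : R) (P : R -> Prop) :
  (exists2 e : R, 0 < e & forall s, `|t - s| < e -> P s) -> nbhs t P.
Proof. by move=> [e e0 H]; apply/nbhs_ballP; exists e => // s; rewrite -ball_normE /=; exact: H. Qed.

Lemma nearR' (t : R) (P : R -> Prop) :
  nbhs t P -> exists2 e : R, 0 < e & forall s, `|t - s| < e -> P s.
Proof. by move/nbhs_ballP => [e e0 H]; exists e => // s hs; apply: H; rewrite -ball_normE /=. Qed.


Lemma rz_sym {V adj Z vtx edge} (rz : @realization V adj Z vtx edge) x y : adj x y -> adj y x.
Proof. by case: rz => [[sym _] _]; apply: sym. Qed.

Lemma rz_irr {V adj Z vtx edge} (rz : @realization V adj Z vtx edge) x : ~ adj x x.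
Proof. by case: rz => [[_ [irr _]] _]; apply: irr. Qed.

Lemma rz_vinj {V adj Z vtx edge} (rz : @realization V adj Z vtx edge) : injective vtx.
Proof. by case: rz => [_ [vi _]]. Qed.

Lemma rz_e0 {V adj Z vtx edge} (rz : @realization V adj Z vtx edge) x y :
  adj x y -> edge x y 0 = vtx x.
Proof. by case: rz => [_ [_ [e _]]] /e []. Qed.

Lemma rz_e1 {V adj Z vtx edge} (rz : @realization V adj Z vtx edge) x y :
  adj x y -> edge x y 1 = vtx y.
Proof. by case: rz => [_ [_ [e _]]] /e []. Qed.

Lemma rz_flip {V adj Z vtx edge} (rz : @realization V adj Z vtx edge) x y t :
  adj x y -> unit_int t -> edge x y t = edge y x (1 - t).
Proof. by case: rz => [_ [_ [_ [f _]]]] a u; rewrite f. Qed.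

Lemma rz_vne {V adj Z vtx edge} (rz : @realization V adj Z vtx edge) x y t v :
  adj x y -> open_unit_int t -> edge x y t <> vtx v.
Proof. by case: rz => [_ [_ [_ [_ [f _]]]]]; apply: f. Qed.

Lemma rz_intinj {V adj Z vtx edge} (rz : @realization V adj Z vtx edge) x y t x' y' t' :
  adj x y -> adj x' y' -> open_unit_int t -> open_unit_int t' -> edge x y t = edge x' y' t' ->
     (x = x' /\ y = y' /\ t = t') \/ (x = y' /\ y = x' /\ t = 1 - t').
Proof. by case: rz => [_ [_ [_ [_ [_ [f _]]]]]]; apply: f. Qed.

Lemma rz_cover {V adj Z vtx edge} (rz : @realization V adj Z vtx edge) (z : Z) :
  (exists v, z = vtx v) \/
     (exists x y t, adj x y /\ open_unit_int t /\ z = edge x y t).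
Proof. by case: rz => [_ [_ [_ [_ [_ [_ [f _]]]]]]]; apply: f. Qed.

Lemma rz_open {V adj Z vtx edge} (rz : @realization V adj Z vtx edge) (A : set Z) :
  open A <->
     forall x y, adj x y -> exists O : set R, open O /\
       (edge x y @^-1` A) `&` unit_int = O `&` unit_int.
Proof. by case: rz => [_ [_ [_ [_ [_ [_ [_ f]]]]]]]; apply: f. Qed.

Lemma rz_interior {V adj Z vtx edge} (rz : @realization V adj Z vtx edge) x y t a b s :
  adj x y -> adj a b -> unit_int t -> open_unit_int s -> edge x y t = edge a b s ->
  open_unit_int t.
Proof.
move=> axy aab /uiE /andP [t0 t1] os E; apply/ouiE.
have [tz|tnz] := eqVneq t 0.
  by exfalso; move: E; rewrite tz (rz_e0 rz axy) => /esym; apply: (rz_vne rz aab os).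
have [to|tno] := eqVneq t 1.
  by exfalso; move: E; rewrite to (rz_e1 rz axy) => /esym; apply: (rz_vne rz aab os).
by rewrite lt_neqAle eq_sym tnz t0 /= lt_neqAle tno t1.
Qed.

Lemma oui_ui (t : R) : open_unit_int t -> unit_int t.
Proof. by move/ouiE => /andP [a b]; apply/uiE; rewrite !ltW. Qed.

Lemma rz_inj_same {V adj Z vtx edge} (rz : @realization V adj Z vtx edge) p y y' u u' :
  adj p y -> adj p y' -> open_unit_int u -> open_unit_int u' ->
  edge p y u = edge p y' u' -> y = y' /\ u = u'.
Proof.
move=> a a' o o' E; case: (rz_intinj rz a a' o o' E) => [[_ [-> ->]]//|[E1 [E2 _]]].
by rewrite E2 in a; case: (rz_irr rz a).
Qed.

Lemma rz_openc_at {V adj Z vtx edge} (rz : @realization V adj Z vtx edge) (A : set Z) x y t :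
  open A -> adj x y -> unit_int t -> A (edge x y t) ->
  exists2 e : R, 0 < e & forall s, unit_int s -> `|t - s| < e -> A (edge x y s).
Proof.
move=> oA axy ut At; have [Op [oO EO]] := (rz_open rz A).1 oA x y axy.
have : (Op `&` unit_int) t by rewrite -EO.
case=> Ot _.
have [e e0 H] := nearR' (open_nbhs_nbhs (conj oO Ot)).
exists e => // s us ts.
have : (edge x y @^-1` A `&` unit_int) s by rewrite EO; split => //; apply: H.
by case.
Qed.

Lemma rz_edge_cont {V adj Z vtx edge} (rz : @realization V adj Z vtx edge) x y s :
  adj x y -> open_unit_int s -> {for s, continuous (edge x y)}.
Proof.
move=> axy os A; rewrite nbhsE => -[B [oB Bs] BA] /=.
have [e e0 H] := rz_openc_at rz oB axy (oui_ui os) Bs.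
move/ouiE: os => /andP [s0 s1].
apply: nearR; exists (Num.min e (Num.min s (1 - s))).
  by rewrite !lt_min e0 s0 subr_gt0 s1.
move=> t; rewrite !lt_min => /and3P [te ts t1s]; apply: BA; apply: H => //.
apply/uiE; move: ts t1s; rewrite !ltr_norml => /andP [? ?] /andP [? ?].
apply/andP; split; lra.
Qed.



Lemma ui_cases (t : R) : unit_int t -> t = 0 \/ t = 1 \/ open_unit_int t.
Proof.
move/uiE => /andP [t0 t1].
have [->|tnz] := eqVneq t 0; first by left.
have [->|tno] := eqVneq t 1; first by right; left.
by right; right; apply/ouiE; rewrite lt_neqAle eq_sym tnz t0 /= lt_neqAle tno t1.
Qed.

Lemma open_1m (J : set R) : open J -> open [set t | J (1 - t)].
Proof.
move=> oJ; rewrite openE => t Jt; rewrite /interior; apply: nearR.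
have [e e0 H] := nearR' (open_nbhs_nbhs (conj oJ Jt)).
exists e => // s ts; apply: H.
have -> : 1 - t - (1 - s) = s - t by ring.
by rewrite distrC.
Qed.

Lemma rz_open_edgeJ {V adj Z vtx edge} (rz : @realization V adj Z vtx edge) a b (J : set R) :
  adj a b -> open J -> J `<=` open_unit_int -> open (edge a b @` J).
Proof.
move=> aab oJ Jo; apply/(rz_open rz) => x y axy.
have [[-> ->]|nab] := pselect (x = a /\ y = b).
  exists J; split => //; apply/seteqP; split => t [Ht ut]; last by split => //; exists t.
  case: Ht => s Js E.
  have ot := rz_interior rz aab aab ut (Jo s Js) (esym E).
  by have [_ st] := rz_inj_same rz aab aab (Jo s Js) ot E; split => //; rewrite -st.
have [[-> ->]|nba] := pselect (x = b /\ y = a).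
  exists [set t | J (1 - t)]; split.
    exact: open_1m.
  apply/seteqP; split => t [Ht ut].
    case: Ht => s Js E.
    have ot := rz_interior rz (rz_sym rz aab) aab ut (Jo s Js) (esym E).
    have ot' : open_unit_int (1 - t).
      by move/ouiE: ot => /andP [? ?]; apply/ouiE; apply/andP; split; lra.
    rewrite (rz_flip rz (rz_sym rz aab) ut) in E.
    have [_ st] := rz_inj_same rz aab aab (Jo s Js) ot' E.
    by split => //=; rewrite -st.
  split => //; exists (1 - t) => //.
  by rewrite (rz_flip rz (rz_sym rz aab) ut).
exists set0; split; first exact: open0.
apply/seteqP; split => t [Ht ut] //; case: Ht => s Js E.
have ot := rz_interior rz axy aab ut (Jo s Js) (esym E).
case: (rz_intinj rz axy aab ot (Jo s Js) (esym E)) => [[? [? _]]|[? [? _]]].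
  by case: nab.
by case: nba.
Qed.

Definition star {V : Type} {Z : topologicalType} (adj : V -> V -> Prop) (vtx : V -> Z)
  (edge : V -> V -> R -> Z) (p : V) (e : R) : set Z :=
  [set z | z = vtx p \/ exists y u, adj p y /\ 0 < u < e /\ z = edge p y u].

Lemma star_pre {V adj Z vtx edge} (rz : @realization V adj Z vtx edge) p y e t :
  0 < e <= 1 -> adj p y -> unit_int t -> (star adj vtx edge p e (edge p y t) <-> t < e).
Proof.
move=> /andP [e0 e1] apy ut; split.
  case=> [E|[y' [u [a' [/andP [u0 ue] E]]]]].
    case: (ui_cases ut) => [->//|[t1|ot]].
      by rewrite t1 (rz_e1 rz apy) in E; move/(rz_vinj rz): E => E; rewrite E in apy; case: (rz_irr rz apy).
    by case: (rz_vne rz apy ot E).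
  have ou : open_unit_int u by apply/ouiE; rewrite u0 /=; apply: lt_le_trans ue e1.
  have ot := rz_interior rz apy a' ut ou E.
  by have [_ ->] := rz_inj_same rz apy a' ot ou E.
move=> te; case: (ui_cases ut) => [t0|[t1|ot]].
- by left; rewrite t0 (rz_e0 rz apy).
- by rewrite t1 in te; move: (lt_le_trans te e1); rewrite ltxx.
- by right; exists y, t; split => //; split => //; move/ouiE: ot => /andP [-> _].
Qed.

Lemma star_open {V adj Z vtx edge} (rz : @realization V adj Z vtx edge) p e :
  0 < e <= 1 -> open (star adj vtx edge p e).
Proof.
move=> he; apply/(rz_open rz) => x y axy.
have [xp|xnp] := pselect (x = p).
  subst x; exists [set t | t < e]; split; first exact: open_lt.
  apply/seteqP; split => t [Ht ut]; split => //.
    by apply/(star_pre rz he axy ut).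
  by apply/(star_pre rz he axy ut).
have [yp|ynp] := pselect (y = p).
  subst y; exists [set t | 1 - e < t]; split; first exact: open_gt.
  have ayx := rz_sym rz axy.
  apply/seteqP; split => t [Ht ut]; split => //=.
    have ut' : unit_int (1 - t) by move/uiE: ut => /andP [? ?]; apply/uiE; apply/andP; split; lra.
    move: Ht; rewrite /= (rz_flip rz axy ut) => /(star_pre rz he ayx ut') ?; lra.
  have ut' : unit_int (1 - t) by move/uiE: ut => /andP [? ?]; apply/uiE; apply/andP; split; lra.
  rewrite /= (rz_flip rz axy ut); apply/(star_pre rz he ayx ut'); move: Ht => /= ?; lra.
exists set0; split; first exact: open0.
apply/seteqP; split => t [Ht ut] //; case: Ht => [E|[y' [u [a' [/andP [u0 ue] E]]]]].
  case: (ui_cases ut) => [t0|[t1|ot]].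
  - by rewrite t0 (rz_e0 rz axy) in E; case: xnp; apply: (rz_vinj rz).
  - by rewrite t1 (rz_e1 rz axy) in E; case: ynp; apply: (rz_vinj rz).
  - by case: (rz_vne rz axy ot E).
have ou : open_unit_int u.
  by apply/ouiE; rewrite u0 /=; apply: lt_le_trans ue _; case/andP: he.
have ot := rz_interior rz axy a' ut ou E.
by case: (rz_intinj rz axy a' ot ou E) => [[? _]|[_ [? _]]].
Qed.

Lemma rz_near0 {V adj Z vtx edge} (rz : @realization V adj Z vtx edge) (A : set Z) x y :
  open A -> A (vtx x) -> adj x y ->
  exists2 e : R, 0 < e <= 1 & forall u, 0 < u < e -> A (edge x y u).
Proof.
move=> oA Ax axy.
have u0 : unit_int 0 by apply/uiE; rewrite lexx ler01.
have [e e0 H] := rz_openc_at rz oA axy u0 (eq_ind_r A Ax (rz_e0 rz axy)).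
exists (Num.min e 1); first by rewrite lt_min e0 ltr01 /= ge_min lexx orbT.
move=> u /andP [u0' ue]; move: ue; rewrite lt_min => /andP [ue u1].
apply: H; first by apply/uiE; rewrite !ltW.
by rewrite sub0r normrN gtr0_norm.
Qed.

Lemma mm01 (x y : R) : (x = 0 \/ x = 1) -> (y = 0 \/ y = 1) -> x <> y ->
  Num.min x y <= 2^-1 <= Num.max x y.
Proof.
have /andP [h0 h1] : 0 < (2:R)^-1 < 1.
  by rewrite invr_gt0 ltr0n /= invf_lt1 ?ltr0n ?ltr1n.
case=> -> [] -> xy; try by case: xy.
all: rewrite ge_min le_max; apply/andP; split; apply/orP.
all: try by left; apply: ltW.
all: try by right; apply: ltW.
Qed.

Lemma ivt01 (phi : R -> R) (a b : R) : a <= b -> {within `[a, b], continuous phi} ->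
  (forall x, phi x = 0 \/ phi x = 1) -> phi a <> phi b -> False.
Proof.
move=> ab pc p01 pab.
have /andP [g0 g1] : 0 < (2:R)^-1 < 1.
  by rewrite invr_gt0 ltr0n /= invf_lt1 ?ltr0n ?ltr1n.
have h1 : (2:R)^-1 <> 0 by move=> E; rewrite E ltxx in g0.
have h2 : (2:R)^-1 <> 1 by move=> E; rewrite E ltxx in g1.
move: (mm01 (p01 a) (p01 b) pab) => /(IVT ab pc) [c _ pc2].
by case: (p01 c); rewrite pc2 => E; [apply: h1|apply: h2].
Qed.



Lemma half_test (a b : R) : a < b -> a < (a + b) / 2 < b.
Proof. move=> ab; apply/andP; split; lra. Qed.

Lemma conn_lemma {Z : topologicalType} {I : Type} (g : R -> Z) (l r : R) (Op : I -> set Z) :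
  l < r ->
  (forall s, l < s < r -> {for s, continuous g}) ->
  (forall i, open (Op i)) ->
  (forall s, l < s < r -> exists i, Op i (g s)) ->
  (forall i j z, Op i z -> Op j z -> Op i = Op j) ->
  exists i, forall s, l < s < r -> Op i (g s).
Proof.
move=> lr gc oO cov disj.
have hs0 : l < (l + r) / 2 < r by apply: half_test.
have [i0 Hi0] := cov _ hs0; exists i0 => s hs.
have [//|nH] := pselect (Op i0 (g s)); exfalso.
pose phi := fun x => if pselect (Op i0 (g x)) then (1:R) else 0.
have p01 : forall x, phi x = 0 \/ phi x = 1.
  by move=> x; rewrite /phi; case: pselect => ?; [right|left].
have loc : forall x, l < x < r -> {for x, continuous phi}.
  move=> x hx; apply: (near_cst_continuous (phi x)).
  have [Hx|Hx] := pselect (Op i0 (g x)).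
    have N : nbhs x (g @^-1` Op i0) := gc x hx (Op i0) (open_nbhs_nbhs (conj (oO i0) Hx)).
    apply: filterS N => y Hy; rewrite /phi.
    by case: pselect => // ?; case: pselect.
  have [j Hj] := cov x hx.
  have N : nbhs x (g @^-1` Op j) := gc x hx (Op j) (open_nbhs_nbhs (conj (oO j) Hj)).
  apply: filterS N => y Hy; rewrite /phi.
  case: pselect => [Hy'|?]; last by case: pselect.
  by case: Hx; rewrite (disj _ _ _ Hy' Hy).
have phi1 : phi ((l + r) / 2) = 1 by rewrite /phi; case: pselect.
have phi0 : phi s = 0 by rewrite /phi; case: pselect.
have sub : forall a b, l < a -> b < r -> {within `[a, b], continuous phi}.
  move=> a b la br; apply: continuous_in_subspaceT => c.
  rewrite inE /= in_itv /= => /andP [ac cb]; apply: loc; apply/andP; split.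
    by apply: lt_le_trans ac.
  by apply: le_lt_trans br.
case/andP: hs0 => h1 h2; case/andP: hs => h3 h4.
case/orP: (le_total ((l + r) / 2) s) => le.
  apply: (ivt01 le (sub _ _ h1 h4) p01); by rewrite phi1 phi0 => /eqP; rewrite oner_eq0.
apply: (ivt01 le (sub s ((l + r) / 2) h3 h2) p01); by rewrite phi1 phi0 => /eqP; rewrite eq_sym oner_eq0.
Qed.



Lemma ballE (t0 eta s : R) : `|t0 - s| < eta <-> t0 - eta < s < t0 + eta.
Proof.
rewrite ltr_norml; split => /andP [h1 h2]; apply/andP; split; lra.
Qed.

Lemma open_oo (a b : R) : open [set s | a < s < b].
Proof.
have -> : [set s | a < s < b] = [set s | s > a] `&` [set s | s < b].
  by apply/seteqP; split => s /=; [move/andP|move=> [-> ->]].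
by apply: openI; [exact: open_gt|exact: open_lt].
Qed.

Lemma oui_open : open open_unit_int.
Proof.
have -> : open_unit_int = [set s : R | 0 < s < 1] by apply/seteqP; split => s /ouiE.
exact: open_oo.
Qed.

Lemma ball_split (t0 eta s : R) : `|t0 - s| < eta -> s <> t0 ->
  (t0 < s < t0 + eta) \/ (t0 - eta < s < t0).
Proof.
move/ballE => /andP [h1 h2] st; case: (ltgtP s t0) => h.
- by right; apply/andP; split.
- by left; apply/andP; split.
- by case: st.
Qed.

Lemma VV_core {V adj Z vtx edge} (rz : @realization V adj Z vtx edge) p (psi : R -> Z) (t0 eta : R) :
  0 < eta ->
  (forall s, `|t0 - s| < eta -> {for s, continuous psi}) ->
  (forall s s', `|t0 - s| < eta -> `|t0 - s'| < eta -> psi s = psi s' -> s = s') ->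
  (forall J : set R, open J -> J `<=` [set s | `|t0 - s| < eta] -> open (psi @` J)) ->
  psi t0 = vtx p ->
  (forall s, `|t0 - s| < eta -> star adj vtx edge p 1 (psi s)) ->
  ~ degree_two adj p -> False.
Proof.
move=> e0 pc pinj popen pt0 pst nd2.
have b0 : `|t0 - t0| < eta by rewrite subrr normr0.
pose Oy := fun y => edge p y @` [set u | adj p y /\ open_unit_int u].
have oOy : forall y, open (Oy y).
  move=> y; have [apy|napy] := pselect (adj p y).
    rewrite /Oy (_ : [set u | adj p y /\ open_unit_int u] = open_unit_int).
      exact: (rz_open_edgeJ rz apy oui_open).
    by apply/seteqP; split => u // [].
  rewrite (_ : Oy y = set0); first exact: open0.
  by apply/seteqP; split => z // [u [apy _] _].
have dOy : forall i j z, Oy i z -> Oy j z -> Oy i = Oy j.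
  move=> i j z [u [ai ou] E] [u' [aj ou'] E'].
  by have [-> _] := rz_inj_same rz ai aj ou ou' (etrans E (esym E')).
have side : forall l r, l < r -> (forall s, l < s < r -> `|t0 - s| < eta /\ s <> t0) ->
    exists y, adj p y /\ forall s, l < s < r -> Oy y (psi s).
  move=> l r lr hlr.
  have [y Hy] : exists y, forall s, l < s < r -> Oy y (psi s).
    apply: (conn_lemma lr) => //.
    - by move=> s /hlr [hs _]; apply: pc.
    - move=> s /hlr [hs st]; case: (pst s hs) => [E|[y [u [apy [ou E]]]]].
        by case: st; apply: pinj => //; rewrite pt0.
      exists y; exists u => //; split => //; apply/ouiE; exact: ou.
  exists y; split => //.
  have [u [apy _] _] := Hy _ (half_test lr); exact: apy.
have [yR [ayR HR]] : exists y, adj p y /\ forall s, t0 < s < t0 + eta -> Oy y (psi s).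
  apply: side; first lra.
  by move=> s /andP [h1 h2]; split; [apply/ballE; apply/andP; split; lra|move=> E; rewrite E ltxx in h1].
have [yL [ayL HL]] : exists y, adj p y /\ forall s, t0 - eta < s < t0 -> Oy y (psi s).
  apply: side; first lra.
  by move=> s /andP [h1 h2]; split; [apply/ballE; apply/andP; split; lra|move=> E; rewrite E ltxx in h2].
pose W := psi @` [set s | `|t0 - s| < eta].
have oW : open W.
  apply: popen => //.
  have -> : [set s | `|t0 - s| < eta] = [set s | t0 - eta < s < t0 + eta].
    by apply/seteqP; split => s /ballE.
  exact: open_oo.
have Wp : W (vtx p) by exists t0.
have nbr : forall y, adj p y -> y = yR \/ y = yL.
  move=> y apy; have [e /andP [e0' e1] HW] := rz_near0 rz oW Wp apy.
  have ou : 0 < e / 2 < e by apply/andP; split; lra.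
  have [s hs E] := HW _ ou.
  have ou' : open_unit_int (e / 2) by apply/ouiE; apply/andP; split; lra.
  have st : s <> t0.
    by move=> st; rewrite st pt0 in E; apply: (rz_vne rz apy ou' (esym E)).
  case: (ball_split hs st) => hside.
    have [u' [_ ou''] E'] := HR _ hside.
    by left; have [] := rz_inj_same rz apy ayR ou' ou'' (etrans (esym E) (esym E')).
  have [u' [_ ou''] E'] := HL _ hside.
  by right; have [] := rz_inj_same rz apy ayL ou' ou'' (etrans (esym E) (esym E')).
have [eqRL|neRL] := pselect (yR = yL); last first.
  apply: nd2; exists yR, yL; split => // y; split; first exact: nbr.
  by case=> ->.
rewrite -eqRL in HL.
have [e /andP [e0' e1] HW] := rz_near0 rz oW Wp ayR.
pose SR := [set s | t0 < s < t0 + eta].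
pose SL := [set s | t0 - eta < s < t0].
have SRb : forall s, SR s -> `|t0 - s| < eta.
  by move=> s /andP [h1 h2]; apply/ballE; apply/andP; split; lra.
have SLb : forall s, SL s -> `|t0 - s| < eta.
  by move=> s /andP [h1 h2]; apply/ballE; apply/andP; split; lra.
pose Ob := fun b : bool => psi @` (if b then SR else SL).
have [b1 Hb1] : exists b, forall u, 0 < u < e -> Ob b (edge p yR u).
  apply: (conn_lemma e0') => //.
  - move=> u /andP [u0 ue]; apply: (rz_edge_cont rz ayR).
    by apply/ouiE; apply/andP; split => //; apply: lt_le_trans e1.
  - by case; apply: popen; [exact: open_oo|exact: SRb|exact: open_oo|exact: SLb].
  - move=> u ou; have [s hs E] := HW _ ou.
    have ou' : open_unit_int u.
      by move/andP: ou => [? ?]; apply/ouiE; apply/andP; split => //; apply: lt_le_trans e1.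
    have st : s <> t0.
      by move=> st; rewrite st pt0 in E; apply: (rz_vne rz ayR ou' (esym E)).
    by case: (ball_split hs st) => hside; [exists true|exists false]; exists s.
  - move=> i j z [s hs E] [s' hs' E']; case: i j hs E hs' E' => [] [] //= hs E hs' E'.
    + have := pinj _ _ (SRb _ hs) (SLb _ hs') (etrans E (esym E')).
      move: hs hs' => /andP [h1 _] /andP [_ h4] es; rewrite es in h1.
      by move: (lt_trans h1 h4); rewrite ltxx.
    + have := pinj _ _ (SLb _ hs) (SRb _ hs') (etrans E (esym E')).
      move: hs hs' => /andP [_ h2] /andP [h3 _] es; rewrite es in h2.
      by move: (lt_trans h2 h3); rewrite ltxx.
have sto : open (star adj vtx edge p e) by apply: (star_open rz); rewrite e0' e1.
have stp : star adj vtx edge p e (psi t0) by left.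
have [e2 e20 H2] := nearR' (pc t0 b0 _ (open_nbhs_nbhs (conj sto stp))).
have fin : forall (SA SB : set R), (forall u, 0 < u < e -> (psi @` SA) (edge p yR u)) ->
    (forall s, SA s -> `|t0 - s| < eta) ->
    (forall s, SB s -> Oy yR (psi s) /\ `|t0 - s| < eta /\ s <> t0) ->
    (exists s, SB s /\ `|t0 - s| < e2) -> (forall s, SA s -> SB s -> False) -> False.
  move=> SA SB HA SAb HB [s [SBs se2]] dis.
  have [[u'' [_ ou''] E''] [sb st]] := HB s SBs.
  case: (H2 s se2) => [E|[y' [u' [ay' [u'e E]]]]].
    by case: st; apply: pinj => //; rewrite pt0.
  have ou' : open_unit_int u'.
    by move/andP: u'e => [? ?]; apply/ouiE; apply/andP; split => //; apply: lt_le_trans e1.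
  have [ey eu] := rz_inj_same rz ayR ay' ou'' ou' (etrans E'' E).
  have [s2 SAs2 E2] := HA u' u'e.
  rewrite -eu E'' in E2.
  have es := pinj _ _ (SAb _ SAs2) sb E2.
  by apply: (dis s2 SAs2); rewrite es.
pose m := Num.min e2 eta.
have m0 : 0 < m by rewrite lt_min e20 e0.
have me2 : m <= e2 by rewrite ge_min lexx.
have meta : m <= eta by rewrite ge_min lexx orbT.
case: b1 Hb1 => Hb1.
  apply: (fin SR SL Hb1 SRb).
  - move=> s hs; split; first exact: HL.
    by split; [exact: SLb|move: hs => /andP [? ?] ?; lra].
  - exists (t0 - m / 2); split; first by apply/andP; split; lra.
    by apply/ballE; apply/andP; split; lra.
  - by move=> s /andP [? ?] /andP [? ?]; lra.
apply: (fin SL SR Hb1 SLb).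
- move=> s hs; split; first exact: HR.
  by split; [exact: SRb|move: hs => /andP [? ?] ?; lra].
- exists (t0 + m / 2); split; first by apply/andP; split; lra.
  by apply/ballE; apply/andP; split; lra.
- by move=> s /andP [? ?] /andP [? ?]; lra.
Qed.



Lemma VV {V adj Z vtx edge} (rz : @realization V adj Z vtx edge)
  (nd2 : forall v, ~ degree_two adj v) (g ginv : Z -> Z) :
  cancel g ginv -> cancel ginv g -> continuous g -> continuous ginv ->
  forall p, exists w, g (vtx p) = vtx w.
Proof.
move=> ggi gig gc gic p.
case: (rz_cover rz (g (vtx p))) => [//|[a [b [t0 [aab [ot0 E]]]]]]; exfalso.
pose psi := fun s => ginv (edge a b s).
have pt0 : psi t0 = vtx p by rewrite /psi -E ggi.
have pc : forall s, open_unit_int s -> {for s, continuous psi}.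
  move=> s os; apply: continuous_comp; first exact: (rz_edge_cont rz aab os).
  exact: gic.
have oS1 : open (star adj vtx edge p 1) by apply: (star_open rz); rewrite ltr01 lexx.
have S1p : star adj vtx edge p 1 (psi t0) by rewrite pt0; left.
have [e1 e10 H1] := nearR' (pc t0 ot0 _ (open_nbhs_nbhs (conj oS1 S1p))).
move/ouiE: (ot0) => /andP [t00 t01].
pose eta := Num.min e1 (Num.min t0 (1 - t0)).
have eta0 : 0 < eta by rewrite !lt_min e10 t00 subr_gt0 t01.
have etae1 : eta <= e1 by rewrite ge_min lexx.
have etat0 : eta <= t0 by rewrite !ge_min lexx orbT.
have eta1t0 : eta <= 1 - t0 by rewrite !ge_min lexx !orbT.
have fact : forall s, `|t0 - s| < eta -> open_unit_int s /\ `|t0 - s| < e1.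
  move=> s /ballE /andP [h1 h2]; split; first by apply/ouiE; apply/andP; split; lra.
  by apply/ballE; apply/andP; split; lra.
apply: (VV_core rz (psi := psi) (t0 := t0) (eta := eta) eta0 _ _ _ pt0 _ (nd2 p)).
- by move=> s /fact [os _]; apply: pc.
- move=> s s' /fact [os _] /fact [os' _] Es.
  have Es' : edge a b s = edge a b s' by rewrite -[LHS]gig -[RHS]gig; congr g.
  by have [] := rz_inj_same rz aab aab os os' Es'.
- move=> J oJ Jb.
  have -> : psi @` J = g @^-1` (edge a b @` J).
    apply/seteqP; split => x.
      by move=> [s Js <-]; exists s => //; rewrite /psi gig.
    by move=> [s Js Es]; exists s => //; rewrite /psi Es ggi.
  move/continuousP: gc; apply; apply: (rz_open_edgeJ rz aab oJ).
  by move=> s /Jb /fact [].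
- by move=> s /fact [_ h]; apply: H1.
Qed.

Definition Oe {V : Type} {Z : topologicalType} (adj : V -> V -> Prop)
  (edge : V -> V -> R -> Z) (c d : V) : set Z :=
  edge c d @` [set u | adj c d /\ open_unit_int u].

Lemma open_Oe {V adj Z vtx edge} (rz : @realization V adj Z vtx edge) c d :
  open (Oe adj edge c d).
Proof.
have [acd|nacd] := pselect (adj c d).
  rewrite /Oe (_ : [set u | adj c d /\ open_unit_int u] = open_unit_int).
    exact: (rz_open_edgeJ rz acd oui_open).
  by apply/seteqP; split => u // [].
rewrite (_ : Oe adj edge c d = set0); first exact: open0.
by apply/seteqP; split => z // [u [acd _] _].
Qed.

Lemma Oe_flip {V adj Z vtx edge} (rz : @realization V adj Z vtx edge) c d :
  adj c d -> Oe adj edge c d = Oe adj edge d c.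
Proof.
move=> acd; have adc := rz_sym rz acd.
have h : forall u, open_unit_int u -> open_unit_int (1 - u).
  by move=> u /ouiE /andP [? ?]; apply/ouiE; apply/andP; split; lra.
apply/seteqP; split => z [u [_ ou] <-].
  by exists (1 - u); [split => //; exact: h|rewrite (rz_flip rz acd (oui_ui ou))].
exists (1 - u); first by split => //; exact: h.
by rewrite (rz_flip rz adc (oui_ui ou)).
Qed.

Lemma Oe_disj {V adj Z vtx edge} (rz : @realization V adj Z vtx edge) c d c' d' z :
  Oe adj edge c d z -> Oe adj edge c' d' z -> Oe adj edge c d = Oe adj edge c' d'.
Proof.
move=> [u [acd ou] E] [u' [acd' ou'] E'].
case: (rz_intinj rz acd acd' ou ou' (etrans E (esym E'))) => [[-> [-> _]]//|[-> [-> _]]].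
exact: (esym (Oe_flip rz acd')).
Qed.

Lemma AD {V adj Z vtx edge} (rz : @realization V adj Z vtx edge) (g ginv : Z -> Z) :
  cancel g ginv -> cancel ginv g -> continuous g -> continuous ginv ->
  (forall p, exists w, ginv (vtx p) = vtx w) ->
  forall x y x' y', adj x y -> g (vtx x) = vtx x' -> g (vtx y) = vtx y' -> adj x' y'.
Proof.
move=> ggi gig gc gic VVi x y x' y' axy gx gy.
have nonvtx : forall v w u q, adj v w -> open_unit_int u -> g (edge v w u) <> vtx q.
  move=> v w u q avw ou E; have [q' Eq] := VVi q.
  by apply: (rz_vne rz (v := q') avw ou); rewrite -Eq -E ggi.
have [[c d] Hcd] : exists cd : V * V, forall s, 0 < s < 1 ->
    Oe adj edge cd.1 cd.2 ((g \o edge x y) s).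
  apply: (conn_lemma (g := g \o edge x y) (Op := fun cd : V * V => Oe adj edge cd.1 cd.2) ltr01).
  - move=> s os; apply: continuous_comp; last exact: gc.
    by apply: (rz_edge_cont rz axy); apply/ouiE.
  - by case=> c d; exact: (open_Oe rz).
  - move=> s os; have os' : open_unit_int s by apply/ouiE.
    case: (rz_cover rz (g (edge x y s))) => [[q Eq]|[c [d [u [acd [ou E]]]]]].
      by case: (nonvtx _ _ _ _ axy os' Eq).
    by exists (c, d); exists u.
  - by case=> c d [c' d'] z /=; exact: (Oe_disj rz).
have acd : adj c d.
  have [|u [acd _] _] := Hcd 2^-1; last exact: acd.
  by apply/andP; split; [rewrite invr_gt0 ltr0n|rewrite invf_lt1 ?ltr0n ?ltr1n].
have endpt : forall v w v', adj v w -> g (vtx v) = vtx v' ->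
    (forall u, 0 < u < 1 -> Oe adj edge c d (g (edge v w u))) -> v' = c \/ v' = d.
  move=> v w v' avw gv Hu.
  have oS : open (g @^-1` star adj vtx edge v' 1).
    by move/continuousP: gc; apply; apply: (star_open rz); rewrite ltr01 lexx.
  have Sv : (g @^-1` star adj vtx edge v' 1) (vtx v) by rewrite /= gv; left.
  have [e /andP [e0 e1] HS] := rz_near0 rz oS Sv avw.
  have ue : 0 < e / 2 < e by apply/andP; split; lra.
  have ou : open_unit_int (e / 2) by apply/ouiE; apply/andP; split; lra.
  case: (HS _ ue) => [E|[z [u' [az [ou' E]]]]].
    by case: (nonvtx _ _ _ _ avw ou E).
  have ou'' : open_unit_int u'.
    by move/andP: ou' => [? ?]; apply/ouiE; apply/andP; split.
  have [u'' [_ ou3] E''] := Hu _ ((ouiE _).1 ou).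
  case: (rz_intinj rz acd az ou3 ou'' (etrans E'' E)) => [[-> _]|[_ [-> _]]].
    by left.
  by right.
have hx := endpt x y x' axy gx (fun u hu => Hcd u hu).
have ayx := rz_sym rz axy.
have hy : y' = c \/ y' = d.
  apply: (endpt y x y' ayx gy) => u /andP [u0 u1].
  have ou : open_unit_int u by apply/ouiE; apply/andP; split.
  rewrite (rz_flip rz ayx (oui_ui ou)).
  by apply: (Hcd (1 - u)); apply/andP; split; lra.
have xy' : x' <> y'.
  move=> E; apply: (rz_irr rz (x := x)).
  have : vtx x = vtx y by rewrite -[LHS]ggi -[RHS]ggi gx gy E.
  by move/(rz_vinj rz) => exy; rewrite {2}exy.
case: hx hy xy' => -> [->|->] xy'.
all: try by case: xy'.
all: by [exact: acd|exact: (rz_sym rz acd)].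
Qed.



Definition extA {V : Type} {Z : topologicalType} (adj : V -> V -> Prop) (vtx : V -> Z)
  (edge : V -> V -> R -> Z) (a : V -> V) (z : Z) : Z :=
  match pselect (exists v, z = vtx v) with
  | left e => vtx (a (proj1_sig (cid e)))
  | right _ =>
    match pselect (exists xyt : V * V * R, adj xyt.1.1 xyt.1.2 /\
        open_unit_int xyt.2 /\ z = edge xyt.1.1 xyt.1.2 xyt.2) with
    | left e => let xyt := proj1_sig (cid e) in edge (a xyt.1.1) (a xyt.1.2) xyt.2
    | right _ => z
    end
  end.

Lemma extA_v {V adj Z vtx edge} (rz : @realization V adj Z vtx edge) a v :
  extA adj vtx edge a (vtx v) = vtx (a v).
Proof.
rewrite /extA; case: pselect => [e|n]; last by case: n; exists v.
by case: cid => v' /= /(rz_vinj rz) ->.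
Qed.

Lemma extA_e {V adj Z vtx edge} (rz : @realization V adj Z vtx edge) a :
  (forall x y, adj x y -> adj (a x) (a y)) ->
  forall x y t, adj x y -> unit_int t ->
  extA adj vtx edge a (edge x y t) = edge (a x) (a y) t.
Proof.
move=> ha x y t axy ut; case: (ui_cases ut) => [->|[->|ot]].
- by rewrite (rz_e0 rz axy) (extA_v rz) (rz_e0 rz (ha _ _ axy)).
- by rewrite (rz_e1 rz axy) (extA_v rz) (rz_e1 rz (ha _ _ axy)).
rewrite /extA; case: pselect => [[v E]|_]; first by case: (rz_vne rz axy ot E).
case: pselect => [e|n]; last by case: n; exists (x, y, t).
case: cid => [[[x' y'] t']] /= [ax' [ot' E]].
case: (rz_intinj rz axy ax' ot ot' E) => [[-> [-> ->]]//|[-> [-> ->]]].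
by rewrite (rz_flip rz (ha _ _ ax') (oui_ui ot')).
Qed.

Lemma extA_cont {V adj Z vtx edge} (rz : @realization V adj Z vtx edge) a :
  (forall x y, adj x y -> adj (a x) (a y)) -> continuous (extA adj vtx edge a).
Proof.
move=> ha; apply/continuousP => A oA; apply/(rz_open rz) => x y axy.
have [Op [oO EO]] := (rz_open rz A).1 oA _ _ (ha _ _ axy).
exists Op; split => //; rewrite -EO.
apply/seteqP; split => t [Ht ut]; split => //=.
  by move: Ht; rewrite /= (extA_e rz ha axy ut).
by rewrite (extA_e rz ha axy ut).
Qed.

Lemma extA_cancel {V adj Z vtx edge} (rz : @realization V adj Z vtx edge) a b :
  (forall x y, adj x y -> adj (a x) (a y)) -> (forall x y, adj x y -> adj (b x) (b y)) ->
  cancel a b -> cancel (extA adj vtx edge a) (extA adj vtx edge b).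
Proof.
move=> ha hb ab z; case: (rz_cover rz z) => [[v ->]|[x [y [t [axy [ot ->]]]]]].
  by rewrite !(extA_v rz) ab.
by rewrite (extA_e rz ha axy (oui_ui ot)) (extA_e rz hb (ha _ _ axy) (oui_ui ot)) !ab.
Qed.

Lemma extA_homeo {V adj Z vtx edge} (rz : @realization V adj Z vtx edge) a :
  graph_aut adj a -> homeo (extA adj vtx edge a).
Proof.
move=> [[b ab ba] Ha].
have ha : forall x y, adj x y -> adj (a x) (a y) by move=> x y /Ha.
have hb : forall x y, adj x y -> adj (b x) (b y).
  by move=> x y axy; apply/Ha; rewrite !ba.
exists (extA adj vtx edge b); split; first exact: extA_cancel.
split; first exact: extA_cancel.
by split; apply: (extA_cont rz).
Qed.

Local Close Scope ring_scope.
Unset Implicit Arguments.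

Theorem proposition25 (Z : topologicalType) :
  hausdorff_space Z -> completely_regular Z -> ~ discrete_sp Z ->
  exists (X : topologicalType) (Phi : (X -> X) -> (Z -> Z)),
    hausdorff_space X /\ scattered X /\
    ~ locally_compact_sp X /\ ~ zero_dim X /\
    quotient_iso_map Phi /\
    (forall (V : Type) (adj : V -> V -> Prop) (vtx : V -> Z)
            (edge : V -> V -> Rdefinitions.R -> Z),
       realization adj vtx edge ->
       (forall v, ~ degree_two adj v) ->
       exists F : (X -> X) -> (V -> V),
         (forall h, homeo h -> forall v, Phi h (vtx v) = vtx (F h v)) /\
         (forall h, homeo h -> graph_aut adj (F h)) /\
         (forall a, graph_aut adj a -> exists h, homeo h /\ F h = a) /\
         ptws_continuous F).
Proof.
move=> hZ cr nd.
exists (Xc Z), (@PhiX Z).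
split; first exact: hausdorffX.
split; first exact: scatteredX.
split; first exact: not_lcX.
split; first exact: not_zero_dimX.
have qi := quotient_isoX cr.
split => // V adj vtx edge rz nd2.
have VVh : forall h : Xc Z -> Xc Z, homeo h -> forall v, exists w, PhiX h (vtx v) = vtx w.
  move=> h hh; have [g' [c1 [c2 [gc g'c]]]] := homeo_PhiX cr hh.
  exact: (VV rz nd2 c1 c2 gc g'c).
pose F := fun (h : Xc Z -> Xc Z) v =>
  match pselect (exists w, PhiX h (vtx v) = vtx w) with
  | left e => proj1_sig (cid e) | right _ => v end.
have FE : forall h, homeo h -> forall v, PhiX h (vtx v) = vtx (F h v).
  move=> h hh v; rewrite /F; case: pselect => [e|n]; last by case: n; exact: VVh.
  by case: cid.
have canc : forall h hinv : Xc Z -> Xc Z, homeo h -> homeo hinv -> cancel h hinv ->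
    cancel (PhiX h) (PhiX hinv).
  move=> h hinv hh hi c z.
  have -> : PhiX hinv (PhiX h z) = PhiX (hinv \o h) z by rewrite (PhiX_comp hi hh).
  have -> : hinv \o h = id by apply: funext => q /=; rewrite c.
  by [].
have FF : forall h hinv : Xc Z -> Xc Z, homeo h -> homeo hinv -> cancel h hinv ->
    cancel (F h) (F hinv).
  move=> h hinv hh hi c v; apply: (rz_vinj rz).
  by rewrite -(FE _ hi) -(FE _ hh) (canc _ _ hh hi c).
exists F; split; first exact: FE.
split; [|split].
- move=> h hh; have [hinv [hi [c1 c2]]] := homeo_inv hh.
  split; first by exists (F hinv); [exact: FF|exact: FF].
  have AD1 : forall h hinv : Xc Z -> Xc Z, homeo h -> homeo hinv -> cancel h hinv ->
      cancel hinv h -> forall x y, adj x y -> adj (F h x) (F h y).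
    move=> k kinv hk hki d1 d2 x y axy.
    apply: (AD rz (canc _ _ hk hki d1) (canc _ _ hki hk d2) (PhiX_cont cr hk)
      (PhiX_cont cr hki) (VVh _ hki) axy); exact: FE.
  move=> x y; split; first exact: (AD1 _ _ hh hi c1 c2).
  move=> H; have := AD1 _ _ hi hh c2 c1 _ _ H; by rewrite !(FF _ _ hh hi c1).
- move=> a ga; have [h [hh Eh]] := qi.2.2.1 _ (extA_homeo rz ga).
  exists h; split => //; apply: funext => v; apply: (rz_vinj rz).
  by rewrite -(FE _ hh) Eh (extA_v rz).
- move=> h hh Fv.
  exists (List.map (fun v => inl (vtx v)) Fv), (fun x => [set q | q = h x \/ exists p, q = inr p]).
  split.
    move=> x _; split; last by left.
    rewrite openXE => z' _; exists setT, 0%N; split; first exact: openT.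
    by split => // u m _ _; right; exists (u, m).
  move=> g hg HU v inv; apply: (rz_vinj rz); rewrite -(FE _ hg) -(FE _ hh).
  case: (HU (inl (vtx v)) (List.in_map _ _ _ inv)); last first.
    by move=> [p]; rewrite (PhiXE _ hg).
  by rewrite (PhiXE _ hg) (PhiXE _ hh) => -[].
Qed.
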